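(* Let $k\geq 0$ and let $i,j\geq k+2$ be integers. Then $R_k^{\mathcal{CO}}(i,j)\geq (i-1)+R_k^{\mathcal{CO}}(i,j-k-1)$, where $\mathcal{CO}$ is the class of cographs.
   Context: All graphs are finite and simple. For a graph $G$ and a nonnegative integer $k$, a $k$-sparse $j$-set is a set of $j$ vertices of $G$ inducing a subgraph of maximum degree at most $k$; a $k$-dense $i$-set is a set of $i$ vertices of $G$ that is $k$-sparse in the complement of $G$. For a graph class $\mathcal{G}$, $R_k^{\mathcal{G}}(i,j)$ is the smallest natural number $n$ such that every graph on $n$ vertices in $\mathcal{G}$ has either a $k$-dense $i$-set or a $k$-sparse $j$-set (in particular every set of at most $k+1$ vertices is both $k$-sparse and $k$-dense). A cograph is a graph containing no induced path on four vertices. *)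

(* Defs.v *)
From mathcomp Require Import all_boot.
From Stdlib Require Import ClassicalEpsilon.
Set Implicit Arguments. Unset Strict Implicit. Unset Printing Implicit Defensive.

Definition simple_graph (T : finType) (e : rel T) : Prop :=
  (forall x, ~~ e x x) /\ (forall x y, e x y = e y x).

Definition cograph (T : finType) (e : rel T) : Prop :=
  ~ exists a b c d : T,
      [/\ uniq [:: a; b; c; d],
          [&& e a b, e b c & e c d] &
          [&& ~~ e a c, ~~ e b d & ~~ e a d]].

Definition k_sparse (T : finType) (e : rel T) (k : nat) (S : {set T}) : Prop :=
  forall x, x \in S -> #|[set y in S | e x y]| <= k.

Definition k_dense (T : finType) (e : rel T) (k : nat) (S : {set T}) : Prop :=
  forall x, x \in S -> #|[set y in S | (y != x) && ~~ e x y]| <= k.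

Definition ramsey_prop_CO (k i j n : nat) : Prop :=
  forall e : rel 'I_n, simple_graph e -> cograph e ->
    (exists S : {set 'I_n}, #|S| = i /\ k_dense e k S) \/
    (exists S : {set 'I_n}, #|S| = j /\ k_sparse e k S).

(* R_k^{CO}(i,j): the smallest n with ramsey_prop_CO k i j n
   (chosen by epsilon; such n exists by Ramsey's theorem). *)
Definition R_CO (k i j : nat) : nat :=
  epsilon (inhabits 0%N)
    (fun n => ramsey_prop_CO k i j n /\ forall m, ramsey_prop_CO k i j m -> n <= m).

(* Main.v *)
Require Import Defs.
From mathcomp Require Import all_boot.
From mathcomp Require Import zify.
From Stdlib Require Import Classical ClassicalEpsilon.
Set Implicit Arguments. Unset Strict Implicit. Unset Printing Implicit Defensive.

Lemma sub_card (T : finType) (A : {set T}) n :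
  n <= #|A| -> exists B : {set T}, B \subset A /\ #|B| = n.
Proof.
elim: n => [|n IH] hn; first by exists set0; rewrite sub0set cards0.
have [B [sBA cB]] := IH (ltnW hn).
have : ~~ (A \subset B).
  apply/negP => sAB; have := subset_leq_card sAB; lia.
case/subsetPn => x xA xB.
exists (x |: B); split.
  by rewrite subUset sub1set xA.
by rewrite cardsU1 xB cB.
Qed.

Definition bad (T : finType) (e : rel T) k i j : Prop :=
  [/\ simple_graph e, cograph e,
      (forall S : {set T}, #|S| = i -> ~ k_dense e k S) &
      (forall S : {set T}, #|S| = j -> ~ k_sparse e k S)].

Lemma bad_notP k i j n (e : rel 'I_n) : bad e k i j -> ~ ramsey_prop_CO k i j n.
Proof.
case=> s c hd hs P; case: (P e s c) => [[S [cS dS]]|[S [cS dS]]].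
  exact: (hd S cS).
exact: (hs S cS).
Qed.

Lemma notP_bad k i j n : ~ ramsey_prop_CO k i j n -> exists e : rel 'I_n, bad e k i j.
Proof.
move=> nP; apply: NNPP => ne; apply: nP => e s c.
apply: NNPP => h; apply: ne; exists e; split => //.
  by move=> S cS dS; apply: h; left; exists S.
by move=> S cS dS; apply: h; right; exists S.
Qed.

Lemma imset_card_le (T U : finType) (f : T -> U) (A : {set T}) (B : {set U}) :
  injective f -> f @: A \subset B -> #|A| <= #|B|.
Proof. by move=> fi sAB; rewrite -(card_imset A fi); apply: subset_leq_card. Qed.

Lemma bad_pull (T U : finType) (f : T -> U) (e : rel U) k i j :
  injective f -> bad e k i j -> bad (fun x y => e (f x) (f y)) k i j.
Proof.
move=> fi [[irr sym] c hd hs]; split.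
- by split=> [x|x y]; [apply: irr|apply: sym].
- move=> [a [b [c' [d [u h1 h2]]]]]; apply: c.
  exists (f a), (f b), (f c'), (f d); split => //.
  by rewrite (map_inj_uniq fi [:: a; b; c'; d]) in u *.
- move=> S cS dS; apply: (hd (f @: S)); first by rewrite card_imset.
  move=> z /imsetP [x xS ->].
  apply: leq_trans (dS x xS).
  have -> : [set y in f @: S | (y != f x) && ~~ e (f x) y]
      = f @: [set y in S | (y != x) && ~~ e (f x) (f y)].
    apply/setP => y; apply/idP/idP.
      rewrite inE => /andP [/imsetP [y' y'S ->] /andP [ne ne2]].
      apply: imset_f; rewrite inE y'S ne2 andbT /=.
      by apply: contra ne => /eqP ->.
    case/imsetP => y'; rewrite inE => /andP [y'S /andP [ne ne2]] ->.
    rewrite inE imset_f //= ne2 andbT.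
    by rewrite (inj_eq fi).
  exact: leq_imset_card.
- move=> S cS dS; apply: (hs (f @: S)); first by rewrite card_imset.
  move=> z /imsetP [x xS ->].
  apply: leq_trans (dS x xS).
  have -> : [set y in f @: S | e (f x) y]
      = f @: [set y in S | e (f x) (f y)].
    apply/setP => y; apply/idP/idP.
      rewrite inE => /andP [/imsetP [y' y'S ->] ne2].
      by apply: imset_f; rewrite inE y'S ne2.
    case/imsetP => y'; rewrite inE => /andP [y'S ne2] ->.
    by rewrite inE imset_f.
  exact: leq_imset_card.
Qed.

Lemma sparse_sub (T : finType) (e : rel T) k (A B : {set T}) :
  B \subset A -> k_sparse e k A -> k_sparse e k B.
Proof.
move=> sBA sA x xB; apply: leq_trans (sA x (subsetP sBA x xB)).
apply: subset_leq_card; apply/subsetP => y; rewrite !inE => /andP [yB ->].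
by rewrite (subsetP sBA y yB).
Qed.

Lemma least (P : nat -> Prop) : (exists n, P n) -> exists n, P n /\ forall m, P m -> n <= m.
Proof.
case=> N; elim: N {-2}N (leqnn N) => [|N IH] M hM PM.
  exists M; split => // m _; lia.
case: (classic (exists m, m < M /\ P m)) => [[m [hm Pm]]|h].
  apply: (IH m) => //; lia.
exists M; split => // m Pm; case: (ltnP m M) => // hm.
by exfalso; apply: h; exists m.
Qed.

Lemma ramsey (T : finType) (e : rel T) (sym : forall x y, e x y = e y x) s :
  forall a b, a + b = s -> forall A : {set T}, 2 ^ s <= #|A| ->
  (exists S : {set T}, [/\ S \subset A, #|S| = a & {in S &, forall x y, x != y -> e x y}]) \/
  (exists S : {set T}, [/\ S \subset A, #|S| = b & {in S &, forall x y, x != y -> ~~ e x y}]).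
Proof.
elim: s => [|s IH] [|a] [|b] // hab A hA.
- by left; exists set0; rewrite sub0set cards0; split => // x y; rewrite inE.
- by left; exists set0; rewrite sub0set cards0; split => // x y; rewrite inE.
- by right; exists set0; rewrite sub0set cards0; split => // x y; rewrite inE.
have : 0 < #|A| by apply: leq_trans hA; rewrite expn_gt0.
case/card_gt0P => v vA.
pose N := [set y in A | (y != v) && e v y].
pose M := [set y in A | (y != v) && ~~ e v y].
have hNM : #|N| + #|M| + 1 = #|A|.
  rewrite (cardsD1 v A) vA -(cardsUI N M).
  have -> : N :&: M = set0.
    by apply/setP => y; rewrite !inE; case: (y \in A); case: (y != v); case: (e v y).
  have -> : N :|: M = A :\ v.
    by apply/setP => y; rewrite !inE; case: (y \in A); case: (y != v); case: (e v y).
  by rewrite cards0; lia.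
have vN : v \notin N by rewrite inE eqxx andbF.
have vM : v \notin M by rewrite inE eqxx andbF.
have sN : N \subset A by apply/subsetP => y; rewrite inE => /andP [].
have sM : M \subset A by apply/subsetP => y; rewrite inE => /andP [].
have X0 : 0 < 2 ^ s by rewrite expn_gt0.
rewrite expnS in hA.
have [hN|hM] : 2 ^ s <= #|N| \/ 2 ^ s <= #|M| by lia.
- have [[S [sS cS cl]]|[S [sS cS ind]]] := IH a b.+1 ltac:(lia) N hN.
  + left; exists (v |: S); split.
    * by rewrite subUset sub1set vA (subset_trans sS sN).
    * rewrite cardsU1 cS; have -> : v \notin S by apply: contra vN; apply: (subsetP sS).
      by [].
    * move=> x y; rewrite !inE => /orP [/eqP ->|xS] /orP [/eqP ->|yS]; rewrite ?eqxx //.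
      -- by move=> _; have := subsetP sS y yS; rewrite inE => /andP [_ /andP [_ ->]].
      -- by move=> _; have := subsetP sS x xS; rewrite inE sym => /andP [_ /andP [_ ->]].
      -- exact: cl.
  + by right; exists S; split => //; apply: subset_trans sS sN.
- have [[S [sS cS cl]]|[S [sS cS ind]]] := IH a.+1 b ltac:(lia) M hM.
  + by left; exists S; split => //; apply: subset_trans sS sM.
  + right; exists (v |: S); split.
    * by rewrite subUset sub1set vA (subset_trans sS sM).
    * rewrite cardsU1 cS; have -> : v \notin S by apply: contra vM; apply: (subsetP sS).
      by [].
    * move=> x y; rewrite !inE => /orP [/eqP ->|xS] /orP [/eqP ->|yS]; rewrite ?eqxx //.
      -- by move=> _; have := subsetP sS y yS; rewrite inE => /andP [_ /andP [_ ->]].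
      -- by move=> _; have := subsetP sS x xS; rewrite inE sym => /andP [_ /andP [_ ->]].
      -- exact: ind.
Qed.

Lemma ramsey_exists k i j : exists n, ramsey_prop_CO k i j n.
Proof.
exists (2 ^ (i + j)) => e [irr sym] _.
have := @ramsey _ e sym (i + j) i j erefl [set: 'I_(2 ^ (i + j))].
rewrite cardsT card_ord => /(_ (leqnn _)) [[S [_ cS cl]]|[S [_ cS ind]]].
- left; exists S; split => // x xS.
  suff /eqP : #|[set y in S | (y != x) && ~~ e x y]| == 0 by move=> ->.
  rewrite cards_eq0; apply/eqP/setP => y; rewrite !inE.
  apply/negP => /andP [yS /andP [ne ne2]].
  by move/negP: ne2; apply; apply: cl => //; rewrite eq_sym.
- right; exists S; split => // x xS.
  suff /eqP : #|[set y in S | e x y]| == 0 by move=> ->.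
  rewrite cards_eq0; apply/eqP/setP => y; rewrite !inE.
  apply/negP => /andP [yS ex].
  case: (eqVneq x y) => [exy|ne]; first by move: ex; rewrite exy (negbTE (irr y)).
  by move/negP: (ind x y xS yS ne); apply.
Qed.

Lemma R_spec k i j : ramsey_prop_CO k i j (R_CO k i j) /\
  forall m, ramsey_prop_CO k i j m -> R_CO k i j <= m.
Proof.
have H := least (ramsey_exists k i j); exact: (epsilon_spec _ _ H).
Qed.

Definition ext (n p q : nat) (e : rel 'I_n) : rel ('I_n + ('I_p + 'I_q))%type :=
  fun x y =>
  match x, y with
  | inl a, inl b => e a b
  | inr (inl a), inr (inl b) => a != b
  | inr (inl _), inr (inr _) => true
  | inr (inr _), inr (inl _) => true
  | _, _ => false
  end.
Arguments ext : clear implicits.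

Lemma ext_simple n p q (e : rel 'I_n) : simple_graph e -> simple_graph (ext n p q e).
Proof.
case=> irr sym; split.
  by case=> [a|[a|a]] /=; rewrite ?eqxx ?irr.
by case=> [a|[a|a]] [b|[b|b]] //=; rewrite ?sym // eq_sym.
Qed.

Lemma ext_cograph n p q (e : rel 'I_n) : cograph e -> cograph (ext n p q e).
Proof.
move=> c [a [b [c' [d [u h1 h2]]]]].
case: a b c' d u h1 h2 => [a|[a|a]] [b|[b|b]] [c'|[c'|c']] [d|[d|d]] //= u h1 h2.
all: try (apply: c; exists a, b, c', d; split => //; by rewrite (map_inj_uniq (@inl_inj _ _) [:: a; b; c'; d]) in u).
all: move: u h1 h2; rewrite /= ?andbF ?andFb ?andbT //.
move=> u _ /and3P [/negPn/eqP ac _ _]; subst.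
by move: u; rewrite !inE eqxx orbT.
Qed.

Definition isI n p q (x : ('I_n + ('I_p + 'I_q))%type) :=
  if x is inr (inr _) then true else false.
Definition isH n p q (x : ('I_n + ('I_p + 'I_q))%type) :=
  if x is inr _ then true else false.
Arguments isI {n p q}. Arguments isH {n p q}.

Lemma ext_dense n p q k i (e : rel 'I_n) : p + k + 2 = i ->
  (forall S : {set 'I_n}, #|S| = i -> ~ k_dense e k S) ->
  forall S : {set ('I_n + ('I_p + 'I_q))%type}, #|S| = i -> ~ k_dense (ext n p q e) k S.
Proof.
move=> hi hd S cS dS.
pose KS := [set (inr (inl u) : ('I_n + ('I_p + 'I_q))%type) | u : 'I_p].
have cKS : #|KS| = p.
  rewrite card_imset ?cardsT ?card_ord //.
  by move=> u v [].
case: (boolP [exists y in S, isH y]) => [/exists_inP [y0 y0S hy0]|noH].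
- have [y [yS yH yI]] : exists y, [/\ y \in S, isH y & forall z, z \in S -> isI z -> isI y].
    case: (boolP [exists y in S, isI y]) => [/exists_inP [y yS hy]|noI].
      exists y; split => //; by case: y yS hy => [a|[a|a]].
    exists y0; split => // z zS zI; move/exists_inP: noI; case; by exists z.
  have sub : S \subset [set z in S | (z != y) && ~~ ext n p q e y z] :|: [set y] :|: KS.
    apply/subsetP => z zS; rewrite !inE zS /=.
    case: (eqVneq z y) => [->|nzy]; first by rewrite orbT.
    case: z zS nzy => [a|[a|a]] zS nzy /=.
    + by case: y yS yH yI {nzy} => [b|[b|b]].
    + by apply/orP; right; apply/imsetP; exists a.
    + have := yI _ zS erefl; by case: y yS yH yI nzy => [b|[b|b]].
  have := subset_leq_card sub.
  rewrite !cardsU cards1 cKS cS.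
  have := dS y yS; set A := #|[set z in S | (z != y) && ~~ ext n p q e y z]|. move: hi; clear. lia.
- have hS : S = inl @: [set a | inl a \in S].
    apply/setP => z; apply/idP/idP => [zS|/imsetP [a]]; last by rewrite inE => ? ->.
    case: z zS => [a|w] zS; first by apply: imset_f; rewrite inE.
    by move/exists_inP: noH; case; exists (inr w).
  apply: (hd [set a | inl a \in S]).
    by rewrite -cS {2}hS card_imset //; apply: inl_inj.
  move=> x; rewrite inE => xS; apply: leq_trans (dS (inl x) xS).
  apply: (@imset_card_le _ _ inl); first exact: inl_inj.
  apply/subsetP => z /imsetP [b]; rewrite !inE => /andP [bS /andP [nb eb]] ->.
  by rewrite bS /= eb andbT.
Qed.

Lemma ext_sparse n p k j' (e : rel 'I_n) :
  (forall S : {set 'I_n}, #|S| = j' -> ~ k_sparse e k S) ->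
  forall S : {set ('I_n + ('I_p + 'I_k.+1))%type}, #|S| = j' + k + 1 -> ~ k_sparse (ext n p k.+1 e) k S.
Proof.
move=> hs S cS sS.
pose SG := [set a | inl a \in S].
pose SH := [set w | inr w \in S].
have h1 : #|S| <= #|SG| + #|SH|.
  have sub : S \subset inl @: SG :|: inr @: SH.
    apply/subsetP => z zS; rewrite inE.
    case: z zS => [a|w] zS; apply/orP; [left|right]; apply: imset_f; by rewrite inE.
  apply: leq_trans (subset_leq_card sub) _.
  rewrite cardsU !card_imset; [lia| exact: inr_inj | exact: inl_inj].
have h2 : #|SH| <= k.+1.
  case: (boolP [exists u in SH, if u is inl _ then true else false]) => [/exists_inP [u uH hu]|noK].
    rewrite (cardsD1 u SH) uH /=.
    have := sS (inr u) ltac:(by rewrite inE in uH).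
    suff : #|SH :\ u| <= #|[set y in S | ext n p k.+1 e (inr u) y]|. by move=> h h'; rewrite add1n ltnS; apply: leq_trans h h'.
    apply: (@imset_card_le _ _ inr); first exact: inr_inj.
    apply/subsetP => z /imsetP [w]; rewrite !inE => /andP [nwu wS] ->.
    rewrite wS /=; case: u uH hu nwu => [a|a] // _ _; case: w wS => [b|b] //= _.
    by apply: contra => /eqP ->.
  have sub : SH \subset inr @: [set: 'I_k.+1].
    apply/subsetP => w wH; case: w wH => [a|a] wH.
      by move/exists_inP: noK; case; exists (inl a).
    by apply: imset_f; rewrite inE.
  apply: leq_trans (subset_leq_card sub) _.
  by apply: leq_trans (leq_imset_card _ _) _; rewrite cardsT card_ord.
have [B [sB cB]] := @sub_card _ SG j' ltac:(lia).
apply: (hs B cB); apply: sparse_sub sB _.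
move=> x; rewrite inE => xS; apply: leq_trans (sS (inl x) xS).
apply: (@imset_card_le _ _ inl); first exact: inl_inj.
apply/subsetP => z /imsetP [b]; rewrite !inE => /andP [bS eb] ->.
by rewrite bS /= eb.
Qed.

Lemma bad0 k i j (e : rel 'I_0) : 0 < i -> 0 < j -> bad e k i j.
Proof.
move=> hi hj; split.
- by split => [[]|[]].
- by move=> [[]].
- by move=> S cS; have := max_card S; rewrite card_ord cS; lia.
- by move=> S cS; have := max_card S; rewrite card_ord cS; lia.
Qed.

Theorem lemma7p5 (k i j : nat) :
  k + 2 <= i -> k + 2 <= j ->
  (i - 1) + R_CO k i (j - k - 1) <= R_CO k i j.
Proof.
move=> hi hj.
set j' := j - k - 1.
have [Pr minr] := R_spec k i j'.
set r := R_CO k i j' in Pr minr *.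
have r0 : 0 < r.
  case: (posnP r) => // r0; rewrite r0 in Pr.
  by case: (bad_notP (@bad0 k i j' (fun _ _ => false) ltac:(lia) ltac:(lia))).
have nP : ~ ramsey_prop_CO k i j' r.-1.
  by move/minr; lia.
have [e be] := notP_bad nP.
have [s c hd hs] := be.
pose e' := ext r.-1 (i - k - 2) k.+1 e.
have be' : bad e' k i j.
  split.
  - exact: ext_simple.
  - exact: ext_cograph.
  - apply: ext_dense hd; lia.
  - have -> : j = j' + k + 1 by rewrite /j'; lia.
    exact: ext_sparse.
have [PR _] := R_spec k i j.
rewrite leqNgt; apply/negP => hlt.
pose T : finType := ('I_r.-1 + ('I_(i - k - 2) + 'I_k.+1))%type.
have cT : #|T| = r.-1 + (i - k - 2) + k.+1 by rewrite !card_sum !card_ord addnA.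
have hle : R_CO k i j <= #|T| by rewrite cT; lia.
pose f := fun x : 'I_(R_CO k i j) => (enum_val (widen_ord hle x) : T).
have fi : injective f.
  by move=> x y /enum_val_inj /(congr1 val) /= /val_inj.
exact: (bad_notP (bad_pull fi be') PR).
Qed.
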